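(* Consider Algorithm NCB run with inputs $k\ge2$ and $T$ on an instance with $\mu^*\ge\frac{32\sqrt{k\log k\log T}}{\sqrt T}$. On the event $G$, no arm $j$ with $\mu_j\le\frac{6\sqrt{k\log k\log T}}{\sqrt T}$ is pulled in any round of Phase II.
   Context: Bandit setup: $k$ arms, arm $i$ a distribution on $[0,1]$ with mean $\mu_i$, $\mu^*:=\max_i\mu_i$. $\log$ is the natural logarithm. Canonical model: a $k\times T$ table $(Y_{i,s})$ of independent entries with $Y_{i,s}$ distributed as arm $i$; the $s$-th pull of arm $i$ yields $Y_{i,s}$. Let $\widehat\mu_{i,s}:=\frac1s\sum_{r=1}^sY_{i,r}$. Algorithm NCB (inputs $k,T$): $\widetilde T:=16\sqrt{\frac{kT\log T}{\log k}}$. Phase I: in each round $t\le\widetilde T$ pull a uniformly random arm. Phase II: in each round $\widetilde T<t\le T$ pull an arm maximizing $\mathrm{NCB}_i:=\widehat\mu_i+4\sqrt{\widehat\mu_i\log T/n_i}$, where $n_i$ is the number of pulls of $i$ before the round and $\widehat\mu_i$ its empirical mean (ties arbitrary). Events: $G_1$: every arm is pulled at least $\frac{\widetilde T}{2k}$ times in Phase I. $G_2$: for every arm $i$ with $\mu_i>\frac{6\sqrt{k\log k\log T}}{\sqrt T}$ and every integer $s$ with $\frac{\widetilde T}{2k}\le s\le T$, $|\mu_i-\widehat\mu_{i,s}|\le 3\sqrt{\frac{\mu_i\log T}{s}}$. $G_3$: for every arm $j$ with $\mu_j\le\frac{6\sqrt{k\log k\log T}}{\sqrt T}$ and every integer $s$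 with $\frac{\widetilde T}{2k}\le s\le T$, $\widehat\mu_{j,s}\le \frac{9\sqrt{k\log k\log T}}{\sqrt T}$. $G:=G_1\cap G_2\cap G_3$. *)

(* Defs.v *)
From mathcomp Require Import all_boot all_order all_algebra.
From mathcomp Require Import all_classical all_reals all_analysis.
Set Implicit Arguments. Unset Strict Implicit. Unset Printing Implicit Defensive.
Import Order.TTheory GRing.Theory Num.Theory.
Local Open Scope ring_scope.

(* Canonical model: Y i s = s-th pull of arm i (s >= 1).
   A run is a sequence a : nat -> 'I_k, a t = arm pulled in round t (t >= 1). *)
Section NCB.
Variables (R : realType) (k T : nat).

Definition Ttil : R := 16 * Num.sqrt (k%:R * T%:R * ln (T%:R : R) / ln (k%:R : R)).

Definition cthr : R :=
  Num.sqrt (k%:R * ln (k%:R : R) * ln (T%:R : R)) / Num.sqrt (T%:R : R).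

(* mu^* = max_i mu_i  (means are >= 0, so 0 is a neutral start) *)
Definition mustar (mu : 'I_k -> R) : R := \big[Num.max/0]_(i < k) mu i.

Definition muhat (Y : 'I_k -> nat -> R) (i : 'I_k) (s : nat) : R :=
  (s%:R)^-1 * \sum_(1 <= r < s.+1) Y i r.

Definition npulls (a : nat -> 'I_k) (i : 'I_k) (t : nat) : nat :=
  \sum_(1 <= s < t) (a s == i).

Definition NCBidx (Y : 'I_k -> nat -> R) (a : nat -> 'I_k) (t : nat) (i : 'I_k) : R :=
  let m := muhat Y i (npulls a i t) in
  m + 4 * Num.sqrt (m * ln (T%:R : R) / (npulls a i t)%:R).

(* a is a run of NCB: Phase I rounds (t <= Ttil) are arbitrary (uniformly random),
   Phase II rounds (Ttil < t <= T) pull an NCB maximizer (ties arbitrary). *)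
Definition NCB_run (Y : 'I_k -> nat -> R) (a : nat -> 'I_k) : Prop :=
  forall t : nat, (1 <= t <= T)%N -> Ttil < t%:R ->
    forall i : 'I_k, NCBidx Y a t i <= NCBidx Y a t (a t).

Definition phase1_pulls (a : nat -> 'I_k) (i : 'I_k) : nat :=
  \sum_(1 <= s < T.+1 | (s%:R : R) <= Ttil) (a s == i).

Definition G1 (a : nat -> 'I_k) : Prop :=
  forall i : 'I_k, Ttil / (2 * k%:R) <= (phase1_pulls a i)%:R.

Definition G2 (mu : 'I_k -> R) (Y : 'I_k -> nat -> R) : Prop :=
  forall i : 'I_k, 6 * cthr < mu i ->
  forall s : nat, Ttil / (2 * k%:R) <= s%:R -> (s <= T)%N ->
    `|mu i - muhat Y i s| <= 3 * Num.sqrt (mu i * ln (T%:R : R) / s%:R).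

Definition G3 (mu : 'I_k -> R) (Y : 'I_k -> nat -> R) : Prop :=
  forall j : 'I_k, mu j <= 6 * cthr ->
  forall s : nat, Ttil / (2 * k%:R) <= s%:R -> (s <= T)%N ->
    muhat Y j s <= 9 * cthr.

Definition G (mu : 'I_k -> R) (Y : 'I_k -> nat -> R) (a : nat -> 'I_k) : Prop :=
  G1 a /\ G2 mu Y /\ G3 mu Y.
End NCB.

(* Main.v *)
Require Import Defs.
From mathcomp Require Import all_boot all_order all_algebra.
From mathcomp Require Import all_classical all_reals all_analysis.
From mathcomp Require Import ring lra zify.
Import Order.TTheory GRing.Theory Num.Theory.
Local Open Scope ring_scope.

Lemma cTt (R : realType) (k T : nat) : (2 <= k)%N -> (2 <= T)%N ->
  cthr R k T * Ttil R k T = 16 * k%:R * ln (T%:R : R).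
Proof.
move=> hk hT.
have kR : (2:R) <= k%:R by rewrite (ler_nat R 2 k).
have TR : (2:R) <= T%:R by rewrite (ler_nat R 2 T).
have lk : 0 < ln (k%:R : R) by apply: ln_gt0; lra.
have lT : 0 < ln (T%:R : R) by apply: ln_gt0; lra.
rewrite /cthr /Ttil.
apply/eqP; rewrite -(@eqrXn2 _ 2) //; last first.
  by apply: mulr_ge0; [apply: mulr_ge0|]; lra.
rewrite !exprMn ?exprVn !sqr_sqrtr; last first.
- by apply: mulr_ge0; [apply: mulr_ge0|]; lra.
- lra.
- by apply: divr_ge0; [apply: mulr_ge0; [apply: mulr_ge0|]|]; lra.
apply/eqP; field; lra.
Qed.

Lemma sqrt_le (R : realType) (x y : R) : 0 <= y -> x <= y ^+ 2 -> Num.sqrt x <= y.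
Proof.
move=> y0 h; rewrite -(ger0_norm y0) -sqrtr_sqr ler_sqrt //; exact: sqr_ge0.
Qed.

Lemma core (R: realType) (c L Tt kk nj ni mj mi mu : R) :
 0 < c -> 0 < L -> 0 < kk -> c*Tt = 16*kk*L ->
 Tt/(2*kk) <= nj -> Tt/(2*kk) <= ni ->
 0 <= mj -> mj <= 9*c -> 32*c <= mu -> 0 <= mi ->
 `|mu - mi| <= 3 * Num.sqrt (mu*L/ni) ->
 mj + 4 * Num.sqrt (mj*L/nj) < mi + 4 * Num.sqrt (mi*L/ni).
Proof.
move=> c0 L0 k0 hcT hj hi mj0 mj9 hmu mi0 habs.
have Tt0 : 0 < Tt.
  have : 0 < c * Tt by rewrite hcT; apply: mulr_gt0 => //; apply: mulr_gt0 => //; lra.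
  by rewrite pmulr_rgt0.
have b0 : 0 < Tt / (2*kk) by apply: divr_gt0 => //; lra.
have e8 : c * (Tt / (2*kk)) = 8 * L.
  rewrite mulrA hcT; field; lra.
have nj0 : 0 < nj by lra.
have ni0 : 0 < ni by lra.
have Lj : L / nj <= c / 8.
  rewrite ler_pdivrMr //; have : c * (Tt / (2*kk)) <= c * nj by rewrite ler_pM2l.
  lra.
have Li : L / ni <= c / 8.
  rewrite ler_pdivrMr //; have : c * (Tt / (2*kk)) <= c * ni by rewrite ler_pM2l.
  lra.
have Lj0 : 0 <= L / nj by apply: divr_ge0; lra.
have Li0 : 0 <= L / ni by apply: divr_ge0; lra.
have sj : Num.sqrt (mj * L / nj) <= 3 * c / 2.
  apply: sqrt_le; first lra.
  rewrite -mulrA; apply: (le_trans (ler_pM mj0 Lj0 mj9 Lj)).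
  rewrite expr2; nra.
have si : Num.sqrt (mu * L / ni) <= mu / 16.
  apply: sqrt_le; first lra.
  rewrite -mulrA; apply: (le_trans (ler_pM _ Li0 (lexx mu) Li)); last first.
    rewrite expr2; nra.
  lra.
have h1 : mu - mi <= 3 * Num.sqrt (mu * L / ni) := le_trans (ler_norm _) habs.
have s0 : 0 <= Num.sqrt (mi * L / ni) := sqrtr_ge0 _.
lra.
Qed.

Lemma npulls_le (k : nat) (a : nat -> 'I_k) i t T : (t <= T.+1)%N -> (npulls a i t <= T)%N.
Proof.
move=> ht; rewrite /npulls.
apply: (@leq_trans (\sum_(1 <= s < t) 1)%N); first by apply: leq_sum => s _; exact: leq_b1.
rewrite sum_nat_const_nat muln1; lia.
Qed.

Lemma npulls_ge (R : realType) (k T : nat) (a : nat -> 'I_k) i t :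
  (1 <= t <= T)%N -> Ttil R k T < t%:R -> (phase1_pulls R T a i <= npulls a i t)%N.
Proof.
move=> /andP[t1 tT] ht; rewrite /phase1_pulls /npulls.
rewrite (big_cat_nat _ (n:=t)) //=; last lia.
have -> : (\sum_(t <= s < T.+1 | ((s%:R : R) <= Ttil R k T)%R) (a s == i) = 0)%N.
  rewrite big_nat_cond big1 //.
  move=> s /andP[/andP[ts _] hs]; exfalso.
  have : (t%:R : R) <= s%:R by rewrite ler_nat.
  move: hs; lra.
rewrite addn0.
rewrite big_mkcond /=; apply: leq_sum => s _; by case: ifP.
Qed.

Lemma muhat_ge0 (R : realType) k (Y : 'I_k -> nat -> R) i s :
  (forall i s, 0 <= Y i s <= 1) -> 0 <= muhat Y i s.
Proof.
move=> hY; rewrite /muhat; apply: mulr_ge0; first by rewrite invr_ge0.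
apply: sumr_ge0 => r _; by case/andP: (hY i r).
Qed.

Lemma exists_best (R : realType) k (mu : 'I_k -> R) x : 0 < x ->
  x <= \big[Num.max/0]_(i < k) mu i -> exists i, x <= mu i.
Proof.
move=> x0 h; case: (boolP [exists i, x <= mu i]) => [/existsP //|/existsPn hn].
suff : \big[Num.max/0]_(i < k) mu i < x by lra.
apply: (big_ind (fun y => y < x)) => //.
  by move=> u v hu hv; rewrite gt_max hu hv.
by move=> i _; move: (hn i); rewrite -ltNge.
Qed.

Theorem lemma3 (R : realType) (k T : nat) (hk : (2 <= k)%N) (hT : (2 <= T)%N)
  (mu : 'I_k -> R) (Y : 'I_k -> nat -> R)
  (hmu : forall i, 0 <= mu i <= 1)
  (hY : forall i s, 0 <= Y i s <= 1)
  (hstar : 32 * cthr R k T <= mustar mu)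
  (a : nat -> 'I_k) (hrun : NCB_run T Y a) (hG : G T mu Y a) :
  forall t : nat, (1 <= t <= T)%N -> Ttil R k T < t%:R ->
  forall j : 'I_k, mu j <= 6 * cthr R k T -> a t != j.
Proof.
move=> t htT ht j hj; apply/eqP => eja.
have kR : (2:R) <= k%:R by rewrite (ler_nat R 2 k).
have TR : (2:R) <= T%:R by rewrite (ler_nat R 2 T).
have lk : 0 < ln (k%:R : R) by apply: ln_gt0; lra.
have lT : 0 < ln (T%:R : R) by apply: ln_gt0; lra.
have c0 : 0 < cthr R k T.
  rewrite /cthr; apply: divr_gt0; rewrite sqrtr_gt0; last lra.
  by apply: mulr_gt0; [apply: mulr_gt0|]; lra.
have [i hi] : exists i, 32 * cthr R k T <= mu i.
  by apply: exists_best hstar; lra.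
case: hG => [G1 [G2 G3]].
have tT : (t <= T.+1)%N by case/andP: htT => _ /leqW.
have hb : forall l, Ttil R k T / (2 * k%:R) <= (npulls a l t)%:R.
  move=> l; apply: (le_trans (G1 l)); rewrite ler_nat; exact: npulls_ge.
have := hrun t htT ht i; rewrite eja /NCBidx => hle.
have k0 : (0 : R) < k%:R by lra.
have m6 : 6 * cthr R k T < mu i by lra.
have := @core R _ _ _ _ _ _ _ _ _ c0 lT k0 (@cTt R k T hk hT) (hb j) (hb i) (@muhat_ge0 R k Y j _ hY)
  (G3 j hj _ (hb j) (@npulls_le k a j t T tT)) hi (@muhat_ge0 R k Y i _ hY)
  (G2 i m6 _ (hb i) (@npulls_le k a i t T tT)).
lra.
Qed.
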